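(* Let $\chi,m\geq 2$ be integers, $\varepsilon>0$, and $R=\vec{R}(\chi)$. Then there exists an integer $M_0=M_0(\chi,m,\varepsilon)$ such that the following holds for every $M\geq M_0$. Let $t\geq1$ be an integer and let the edges of $K^{(3)}_{tM}$ be coloured red/blue with no blue copy of $H(TT_\chi,m)$. Suppose $V(K^{(3)}_{tM})$ is partitioned into $t$ sets $V_1,\dots,V_t$, each inducing a red copy of $K^{(3)}_M$. Then there exists a red closed $2$-clique chain $Q$ on at least $\frac{t(M-30)}{R-1}$ vertices such that each flexible element of $Q$ has at least $M/2$ vertices and all but at most $\varepsilon v(Q)$ vertices of $Q$ are flexible vertices.
   Context: $TT_\chi$ denotes the transitive tournament on $[\chi]$; $\vec{R}(\ell)$ is the least $N$ such that every tournament on at least $N$ vertices contains a copy of $TT_\ell$. $H(T_\chi,m)$ is the 3-uniform hypergraph on disjoint sets $A_1,\dots,A_\chi$ of size $m$ with edges $\{xyz: x,y\in A_i,\ z\in A_j,\ (i,j)\text{ an arc of }T_\chi\}$. A closed $2$-clique chain (3-uniform) is a 3-graph $F$ with $V(F)=\{v_i:i\in\mathbb{Z}/p\mathbb{Z}\}$ and cyclic intervals $I_1,\dots,I_d$ covering $\mathbb{Z}/p\mathbb{Z}$ with $|I_j|\ge3$, each $\{v_i:i\in I_j\}$ inducing a clique in $F$, $|I_j\cap I_{j+1}|=2$ for $j\in[d-1]$ and $|I_d\cap I_1|=2$. The sets $S_j=\{v_i:i\in I_j\}$ are its elements; an element is flexible if $|S_j|>4$. A vertex $v_i$ is a spine vertex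 if $i\in I_j\cap I_{j+1}$ for some $j$ (cyclically), and a flexible vertex otherwise. A red chain is one all of whose edges are red. *)

(* Defs.v *)
From HB Require Import structures.
From mathcomp Require Import all_boot all_order all_algebra.
From mathcomp Require Import reals.
Set Implicit Arguments. Unset Strict Implicit. Unset Printing Implicit Defensive.
Import Order.TTheory GRing.Theory Num.Theory.

Definition tournament (N : nat) (T : rel 'I_N) : Prop :=
  (forall x, ~~ T x x) /\ (forall x y, x != y -> T x y != T y x).

Definition contains_TT (l N : nat) (T : rel 'I_N) : Prop :=
  exists g : 'I_l -> 'I_N, injective g /\ forall i j : 'I_l, i < j -> T (g i) (g j).

Definition TT_forced (l N : nat) : Prop :=
  forall N', N <= N' -> forall T : rel 'I_N', tournament T -> contains_TT l T.

Definition is_tourn_ramsey (l R : nat) : Prop :=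
  TT_forced l R /\ forall N, TT_forced l N -> R <= N.

(* A red/blue colouring of the triples of 'I_n: col e = true means e is red.
   (Only the values on 3-element sets are relevant.) *)
Definition colouring (n : nat) := {set 'I_n} -> bool.

(* A blue copy of H(TT_chi, m): vertex set 'I_chi * 'I_m (A_i = {i} x 'I_m),
   edges {xyz : x,y in A_i distinct, z in A_j, i < j}. *)
Definition blue_H (chi m n : nat) (col : colouring n) : Prop :=
  exists f : 'I_chi * 'I_m -> 'I_n, injective f /\
    forall (i j : 'I_chi) (x y z : 'I_m), i < j -> x != y ->
      ~~ col [set f (i, x); f (i, y); f (j, z)].

Definition cyc_interval (p : nat) (I : {set 'I_p}) : Prop :=
  exists (s : 'I_p) (l : nat), I = [set x : 'I_p | (x + p - s) %% p < l].

(* A red closed 2-clique chain with vertices v_0, ..., v_{p-1} (v injective into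
   'I_n) and cyclic intervals I 0, ..., I (d-1); the chain's edges are the triples
   inside the elements S_j = v @: I j, all of which must be red. *)
Definition red_closed_chain (n : nat) (col : colouring n) (p : nat)
    (v : 'I_p -> 'I_n) (d : nat) (I : nat -> {set 'I_p}) : Prop :=
  injective v /\ 0 < d /\
  (forall j, j < d -> cyc_interval (I j)) /\
  (forall j, j < d -> 3 <= #|I j|) /\
  (forall j, j < d -> #|I j :&: I (j.+1 %% d)| = 2) /\
  (forall x : 'I_p, exists2 j, j < d & x \in I j) /\
  (forall j, j < d -> forall a b c : 'I_p, a \in I j -> b \in I j -> c \in I j ->
        a != b -> a != c -> b != c -> col [set v a; v b; v c]).

Definition chain_elem (n p : nat) (v : 'I_p -> 'I_n) (I : nat -> {set 'I_p}) j :=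
  v @: I j.

Definition flexible_elem (n p : nat) (v : 'I_p -> 'I_n) (I : nat -> {set 'I_p}) j :=
  4 < #|chain_elem v I j|.

Definition spine (p d : nat) (I : nat -> {set 'I_p}) (i : 'I_p) : bool :=
  [exists j : 'I_d, i \in I j :&: I (j.+1 %% d)].

Definition spine_set (p d : nat) (I : nat -> {set 'I_p}) : {set 'I_p} :=
  [set i | spine d I i].

(* Main.v *)
Require Import Defs.
From HB Require Import structures.
From mathcomp Require Import all_boot all_order all_algebra.
From mathcomp Require Import reals.
From mathcomp Require Import zify.
Import Order.TTheory GRing.Theory Num.Theory.
Set Implicit Arguments. Unset Strict Implicit. Unset Printing Implicit Defensive.


Lemma card_cup_le (T : finType) (I : eqType) (s : seq I) (P : pred I) (F : I -> {set T}) :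
  #|\bigcup_(i <- s | P i) F i| <= \sum_(i <- s | P i) #|F i|.
Proof.
elim: s => [|i s IH]; first by rewrite !big_nil cards0.
rewrite !big_cons; case: (P i) => //; apply: leq_trans (leq_add (leqnn _) IH).
by rewrite cardsU leq_subr.
Qed.

Section Ramsey.
Variable (T : finType) (e : rel T).
Hypothesis esym : symmetric e.

Definition clique (A : {set T}) := forall x y, x \in A -> y \in A -> x != y -> e x y.
Definition indep (A : {set T}) := forall x y, x \in A -> y \in A -> x != y -> ~~ e x y.

Lemma ramsey_gen n : forall a b (X : {set T}), a + b = n -> 'C(a + b, a) <= #|X| ->
  (exists2 Y : {set T}, Y \subset X & a <= #|Y| /\ clique Y) \/
  (exists2 Y : {set T}, Y \subset X & b <= #|Y| /\ indep Y).
Proof.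
elim: n => [|n IH] a b X.
  move=> /eqP; rewrite addn_eq0 => /andP[/eqP -> _] _; left; exists set0 => //.
  by rewrite sub0set.
  by split=> // x y; rewrite inE.
case: a => [|a].
  move=> _ _; left; exists set0; first by rewrite sub0set.
  by split=> // x y; rewrite inE.
case: b => [|b].
  move=> _ _; right; exists set0; first by rewrite sub0set.
  by split=> // x y; rewrite inE.
move=> Hn HX.
have [x Hx] : exists x, x \in X.
  apply/set0Pn; rewrite -card_gt0; apply: leq_trans HX; by rewrite bin_gt0 leq_addr.
pose N := [set y in X | (y != x) && e x y].
pose NN := [set y in X | (y != x) && ~~ e x y].
have HXle : #|X| <= 1 + #|N| + #|NN|.
  have : X \subset [set x] :|: N :|: NN.
    apply/subsetP => y Hy; rewrite !inE Hy /=.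
    by case: (y =P x) => //= _; case: (e x y).
  move/subset_leq_card => H; apply: leq_trans H _.
  rewrite -(cards1 x); apply: leq_trans (leq_card_setU _ _) _.
  by rewrite leq_add2r; apply: leq_trans (leq_card_setU _ _) _.
have Hbin : 'C(a.+1 + b.+1, a.+1) = 'C(a + b.+1, a) + 'C(a.+1 + b, a.+1).
  by rewrite addSn binS addnS addSn addnC.
have [HN|HN] := leqP 'C(a + b.+1, a) #|N|.
  case: (IH a b.+1 N) => //; first by lia.
  - case=> Y HY [HYa HYc]; left; exists (x |: Y).
    + apply/subsetP => y; rewrite in_setU1 => /orP[/eqP->//|/(subsetP HY)].
      by rewrite inE => /andP[].
    + have xY : x \notin Y by apply/negP => /(subsetP HY); rewrite inE eqxx andbF.
      rewrite cardsU1 xY; split=> //.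
      move=> y z; rewrite !inE => /orP[/eqP->|Hy] /orP[/eqP->|Hz].
      * by rewrite eqxx.
      * by move=> _; move/(subsetP HY): Hz; rewrite inE => /andP[_ /andP[]].
      * by move=> _; move/(subsetP HY): Hy; rewrite inE esym => /andP[_ /andP[]].
      * exact: HYc.
  - case=> Y HY [HYb HYi]; right; exists Y => //.
    apply: subset_trans HY _; apply/subsetP => y; rewrite inE; by case/andP.
have [HNN|HNN] := leqP 'C(a.+1 + b, a.+1) #|NN|.
  case: (IH a.+1 b NN) => //; first by lia.
  - case=> Y HY [HYb HYi]; left; exists Y => //.
    apply: subset_trans HY _; apply/subsetP => y; rewrite inE; by case/andP.
  - case=> Y HY [HYa HYc]; right; exists (x |: Y).
    + apply/subsetP => y; rewrite in_setU1 => /orP[/eqP->//|/(subsetP HY)].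
      by rewrite inE => /andP[].
    + have xY : x \notin Y by apply/negP => /(subsetP HY); rewrite inE eqxx andbF.
      rewrite cardsU1 xY; split=> //.
      move=> y z; rewrite !inE => /orP[/eqP->|Hy] /orP[/eqP->|Hz].
      * by rewrite eqxx.
      * by move=> _; move/(subsetP HY): Hz; rewrite inE => /andP[_ /andP[]].
      * by move=> _; move/(subsetP HY): Hy; rewrite inE esym => /andP[_ /andP[]].
      * exact: HYc.
exfalso; move: HX; rewrite Hbin; lia.
Qed.

End Ramsey.

Lemma set3_12 (T : finType) (a b c : T) : [set a; b; c] = [set b; a; c].
Proof. by apply/setP=> z; rewrite !inE; case: (z == a); case: (z == b). Qed.
Lemma set3_23 (T : finType) (a b c : T) : [set a; b; c] = [set a; c; b].
Proof. by apply/setP=> z; rewrite !inE; case: (z == b); case: (z == c); rewrite ?orbT. Qed.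

Lemma mem4P (T : finType) (a x y u w : T) :
  a \in [set x; y; u; w] -> [\/ a = x, a = y, a = u | a = w].
Proof.
rewrite !inE => /orP[/orP[/orP[]|]|] /eqP->; by [constructor 1|constructor 2|constructor 3|constructor 4].
Qed.

Section Col.
Variable (V : finType) (col : {set V} -> bool).

Definition red4 (Q : {set V}) := forall a b c, a \in Q -> b \in Q -> c \in Q ->
  a != b -> a != c -> b != c -> col [set a; b; c].

Ltac s3 := first [ assumption | rewrite set3_12; assumption | rewrite set3_23; assumption
  | rewrite set3_12 set3_23; assumption | rewrite set3_23 set3_12; assumption
  | rewrite set3_12 set3_23 set3_12; assumption ].

Lemma four_red x y u w :
  col [set x; y; u] -> col [set x; y; w] -> col [set x; u; w] -> col [set y; u; w] ->
  red4 [set x; y; u; w].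
Proof.
move=> H1 H2 H3 H4 a b c.
move=> /mem4P[]-> /mem4P[]-> /mem4P[]->; rewrite ?eqxx //= => _ _ _; s3.
Qed.


Definition complete3 (X : {set V}) u := forall x y, x \in X -> y \in X -> x != y -> col [set x; y; u].
Definition empty3 (X : {set V}) u := forall x y, x \in X -> y \in X -> x != y -> ~~ col [set x; y; u].
Definition ramb s := 'C(s + s, s).

Lemma homog (us : seq V) L : forall X : {set V}, iter (size us) ramb L <= #|X| ->
  exists2 X' : {set V}, X' \subset X &
    L <= #|X'| /\ forall u, u \in us -> complete3 X' u \/ empty3 X' u.
Proof.
elim: us => [|u us IH] X /=.
  by move=> HX; exists X => //; split=> // u; rewrite in_nil.
move=> HX.
have esym : symmetric (fun x y => col [set x; y; u]).
  by move=> x y /=; rewrite set3_12.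
have [] := ramsey_gen esym (erefl _) HX.
- case=> Y HY [HYs HYc]; have [X' HX' [HX's HX'h]] := IH Y HYs.
  exists X'; first exact: subset_trans HX' HY.
  split=> // u'; rewrite in_cons => /orP[/eqP->|]; last exact: HX'h.
  left=> x y Hx Hy Hxy; apply: HYc => //; exact: (subsetP HX').
- case=> Y HY [HYs HYc]; have [X' HX' [HX's HX'h]] := IH Y HYs.
  exists X'; first exact: subset_trans HX' HY.
  split=> // u'; rewrite in_cons => /orP[/eqP->|]; last exact: HX'h.
  right=> x y Hx Hy Hxy; apply: HYc => //; exact: (subsetP HX').
Qed.

End Col.

Lemma sub_card (T : finType) (A : {set T}) n : n <= #|A| -> exists2 B : {set T}, B \subset A & #|B| = n.
Proof.
elim: n => [|n IH] H; first by exists set0; rewrite ?sub0set ?cards0.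
have [B HB HBn] := IH (ltnW H).
have [x Hx] : exists x, x \in A :\: B.
  apply/set0Pn; rewrite -card_gt0 cardsD (setIidPr HB) HBn; lia.
move: Hx; rewrite inE => /andP[HxB HxA].
exists (x |: B); last by rewrite cardsU1 HxB HBn.
by apply/subsetP => y; rewrite in_setU1 => /orP[/eqP->//|/(subsetP HB)].
Qed.


Section PL.
Variable (V : finType) (col : {set V} -> bool).

Definition noK4 (X Y : {set V}) := forall x y u w, x \in X -> y \in X -> u \in Y -> w \in Y ->
  x != y -> u != w -> ~ red4 col [set x; y; u; w].
Definition blue21 (A B : {set V}) := forall x y u, x \in A -> y \in A -> u \in B -> x != y ->
  ~~ col [set x; y; u].

Lemma blue21_sub (A B A' B' : {set V}) : A' \subset A -> B' \subset B -> blue21 A B -> blue21 A' B'.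
Proof.
move=> HA HB H x y u Hx Hy Hu; apply: H; by [apply: (subsetP HA) | apply: (subsetP HB)].
Qed.

Lemma noK4_sub (A B A' B' : {set V}) : A' \subset A -> B' \subset B -> noK4 A B -> noK4 A' B'.
Proof.
move=> HA HB H x y u w Hx Hy Hu Hw; apply: H; by [apply: (subsetP HA) | apply: (subsetP HB)].
Qed.

Definition NPL k := maxn (iter (k + k) ramb (k + (k + k) * (k + k))) (k + k).

Lemma PL k (X Y : {set V}) : [disjoint X & Y] -> noK4 X Y -> NPL k <= #|X| -> NPL k <= #|Y| ->
  exists X' Y' : {set V}, [/\ X' \subset X, Y' \subset Y, k <= #|X'|, k <= #|Y'| &
                    blue21 X' Y' \/ blue21 Y' X'].
Proof.
move=> Hdis HK HX HY.
have [Y0 HY0 HY0c] : exists2 Y0 : {set V}, Y0 \subset Y & #|Y0| = k + k.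
  apply: sub_card; apply: leq_trans HY; exact: leq_maxr.
have [X1 HX1 [HX1c HX1h]] : exists2 X1 : {set V}, X1 \subset X &
    k + (k + k) * (k + k) <= #|X1| /\ forall u, u \in enum Y0 -> complete3 col X1 u \/ empty3 col X1 u.
  apply: homog; rewrite -cardE HY0c; apply: leq_trans HX; exact: leq_maxl.
pose Yr := [set u in Y0 | [forall x in X1, forall y in X1, (x != y) ==> col [set x; y; u]]].
pose Yb := Y0 :\: Yr.
have HYr : Yr \subset Y0 by apply/subsetP => u; rewrite inE => /andP[].
have Hsum : #|Yr| + #|Yb| = k + k by rewrite cardsD (setIidPr HYr) -HY0c; have := subset_leq_card HYr; lia.
have Hcomp : forall u, u \in Yr -> complete3 col X1 u.
  move=> u; rewrite inE => /andP[_ /forallP H] x y Hx Hy Hxy.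
  by move: (H x); rewrite Hx /= => /forallP /(_ y); rewrite Hy Hxy.
have Hemp : forall u, u \in Yb -> empty3 col X1 u.
  move=> u; rewrite inE => /andP[HuYr HuY0].
  have := HX1h u; rewrite mem_enum => /(_ HuY0) [Hc|//].
  exfalso; move/negP: HuYr; apply; rewrite inE HuY0 /=.
  apply/forallP => x; apply/implyP => Hx; apply/forallP => y; apply/implyP => Hy.
  apply/implyP; exact: Hc.
have [Hb|Hr] := leqP k #|Yb|.
  exists X1, Yb; split => //.
  - by apply: (subset_trans _ HY0); apply/subsetP => u; rewrite inE => /andP[].
  - by apply: leq_trans HX1c; exact: leq_addr.
  left => x y u Hx Hy Hu Hxy; exact: (Hemp u Hu).
pose Pk := fun x (uw : V * V) => [&& uw.1 \in Yr, uw.2 \in Yr, uw.1 != uw.2 & col [set x; uw.1; uw.2]].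
pose killed := [set x in X1 | [exists uw, Pk x uw]].
pose f := fun x => odflt (x, x) [pick uw | Pk x uw].
have Hf : {in killed &, injective f}.
  move=> x x'; rewrite !inE => /andP[Hx1 /existsP[uw Huw]] /andP[Hx1' /existsP[uw' Huw']].
  rewrite /f; case: pickP => [[u w] Hp|]; last by move/(_ uw); rewrite Huw.
  case: pickP => [[u' w'] Hp'|]; last by move/(_ uw'); rewrite Huw'.
  move=> /= [Eu Ew]; subst u' w'; clear uw Huw uw' Huw'.
  case/and4P: Hp => /= Hu Hw Huw Hxuw; case/and4P: Hp' => /= _ _ _ Hx'uw.
  apply/eqP; apply/negP => /negP Hxx'.
  have Hx : x \in X := subsetP HX1 _ Hx1.
  have Hx' : x' \in X := subsetP HX1 _ Hx1'.
  have HuY : u \in Y := subsetP HY0 _ (subsetP HYr _ Hu).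
  have HwY : w \in Y := subsetP HY0 _ (subsetP HYr _ Hw).
  apply: (HK x x' u w Hx Hx' HuY HwY Hxx' Huw).
  apply: four_red => //; by [apply: Hcomp | ].
have Hkil : #|killed| <= (k + k) * (k + k).
  rewrite -(card_in_imset Hf).
  apply: leq_trans (_ : #|setX Yr Yr| <= _).
    apply: subset_leq_card; apply/subsetP => z /imsetP[x]; rewrite inE => /andP[_ /existsP[uw Huw]] ->.
    rewrite /f; case: pickP => [[u w] Hp|]; last by move/(_ uw); rewrite Huw.
    by case/and4P: Hp => /= Hu Hw _ _; rewrite inE /= Hu Hw.
  rewrite cardsX; apply: leq_mul; lia.
exists (X1 :\: killed), Yr; split.
- exact: subset_trans (subsetDl _ _) HX1.
- exact: subset_trans HYr HY0.
- rewrite cardsD; have := subset_leq_card (subsetIr X1 killed); lia.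
- lia.
right => u w x Hu Hw Hx Huw.
move: Hx; rewrite !inE => /andP[Hnk Hx1]; move: Hnk; rewrite Hx1 /= => /existsPn /(_ (u, w)).
rewrite /Pk /= Hu Hw Huw /= => Hn.
by rewrite set3_23 set3_12.
Qed.

End PL.

Section Iter.
Variable (V : finType) (col : {set V} -> bool).

Lemma NPL_ge k : k <= NPL k.
Proof. rewrite /NPL; apply: leq_trans (leq_maxr _ _); exact: leq_addr. Qed.

Lemma iter_mono n n' k : n <= n' -> iter n NPL k <= iter n' NPL k.
Proof.
elim: n' => [|n' IH]; first by rewrite leqn0 => /eqP->.
rewrite leq_eqVlt => /orP[/eqP->//|H].
by apply: leq_trans (IH H) _; exact: NPL_ge.
Qed.

Lemma iterPL (I : finType) (s : seq (I * I)) k : forall W : I -> {set V},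
  (forall a b, a != b -> [disjoint W a & W b]) ->
  (forall a b, a != b -> noK4 col (W a) (W b)) ->
  (forall a, iter (size s) NPL k <= #|W a|) ->
  all (fun ab => ab.1 != ab.2) s ->
  exists W' : I -> {set V}, [/\ forall a, W' a \subset W a, forall a, k <= #|W' a| &
     forall ab, ab \in s -> blue21 col (W' ab.1) (W' ab.2) \/ blue21 col (W' ab.2) (W' ab.1)].
Proof.
elim: s => [|[a b] s IH] W Hdis HK Hsz Hall.
  by exists W; split=> // ab; rewrite in_nil.
move: Hall => /= /andP[Hab Hall].
have [A' [B' [HA' HB' HA'c HB'c Hbl]]] := PL (Hdis a b Hab) (HK a b Hab) (Hsz a) (Hsz b).
pose W1 := fun c => if c == a then A' else if c == b then B' else W c.
have HW1 : forall c, W1 c \subset W c.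
  by move=> c; rewrite /W1; case: eqP => [->//|_]; case: eqP => [->//|_].
have [W' [HW' HW'c HW'b]] : exists W' : I -> {set V}, [/\ forall a, W' a \subset W1 a, forall a, k <= #|W' a| &
     forall ab, ab \in s -> blue21 col (W' ab.1) (W' ab.2) \/ blue21 col (W' ab.2) (W' ab.1)].
  apply: IH => //.
  - move=> c c' Hc; apply: disjointWl (HW1 c) _; apply: disjointWr (HW1 c') _; exact: Hdis.
  - move=> c c' Hc; apply: noK4_sub (HW1 c) (HW1 c') _; exact: HK.
  - move=> c; rewrite /W1; case: eqP => _ //; case: eqP => _ //; apply: leq_trans (Hsz c); exact: NPL_ge.
exists W'; split => //.
- move=> c; exact: subset_trans (HW' c) (HW1 c).
move=> ab; rewrite in_cons => /orP[/eqP->|]; last exact: HW'b.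
have Ha : W' a \subset A' by move: (HW' a); rewrite /W1 eqxx.
have Hb : W' b \subset B' by move: (HW' b); rewrite /W1 eq_sym (negbTE Hab) eqxx.
case: Hbl => H; [left | right]; exact: blue21_sub H.
Qed.

End Iter.

Lemma tourn_of n (B : 'I_n -> 'I_n -> bool) :
  tournament (fun a b : 'I_n => ((a : nat) != b) && (if (a : nat) < b then B a b else ~~ B b a)).
Proof.
split; first by move=> x; rewrite eqxx.
move=> x y Hxy; cbv beta.
case: (ltngtP x y) => H /=.
- by case: (B x y).
- by case: (B y x).
- by move: Hxy; rewrite (val_inj H) eqxx.
Qed.

Lemma blueH_from (chi m Rv : nat) (V : finType) (col : {set V} -> bool) (x0 : V)
  (W : 'I_Rv -> {set V}) :
  TT_forced chi Rv ->
  (forall a b, a != b -> [disjoint W a & W b]) ->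
  (forall a b, a != b -> noK4 col (W a) (W b)) ->
  (forall a, iter (Rv * Rv) NPL m <= #|W a|) ->
  exists f : 'I_chi * 'I_m -> V, injective f /\
    forall (i j : 'I_chi) (x y z : 'I_m), i < j -> x != y ->
      ~~ col [set f (i, x); f (i, y); f (j, z)].
Proof.
move=> HTT Hdis HK Hsz.
pose s := [seq ab <- [seq (a, b) | a <- enum 'I_Rv, b <- enum 'I_Rv] | ab.1 != ab.2].
have Hs : size s <= Rv * Rv.
  rewrite size_filter; apply: leq_trans (count_size _ _) _.
  by rewrite size_allpairs size_enum_ord.
have [W' [HW' HW'c HW'b]] := iterPL (s := s) (k := m) Hdis HK
   (fun a => leq_trans (iter_mono m Hs) (Hsz a)) (filter_all _ _).
pose B := fun a b => [forall x in W' a, forall y in W' a, forall u in W' b,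
                       (x != y) ==> ~~ col [set x; y; u]].
have BP : forall a b, B a b <-> blue21 col (W' a) (W' b).
  move=> a b; split.
  - move=> /forallP H x y u Hx Hy Hu Hxy.
    move: (H x); rewrite Hx /= => /forallP /(_ y); rewrite Hy /= => /forallP /(_ u).
    by rewrite Hu Hxy.
  - move=> H; apply/forallP => x; apply/implyP => Hx; apply/forallP => y; apply/implyP => Hy.
    apply/forallP => u; apply/implyP => Hu; apply/implyP; exact: H.
pose T : rel 'I_Rv := fun a b => ((a : nat) != b) && (if (a : nat) < b then B a b else ~~ B b a).
have HT : tournament T := tourn_of B.
have [g [Hg HgT]] := HTT Rv (leqnn _) T HT.
have Hbl : forall i j : 'I_chi, i < j -> blue21 col (W' (g i)) (W' (g j)).
  move=> i j Hij; move: (HgT i j Hij); rewrite /T /= => /andP[Hne].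
  case: ifP => _; first by move/BP.
  move=> HnB.
  have Hin : (g i, g j) \in s.
    rewrite mem_filter /=; apply/andP; split.
      by move: Hne; apply: contra => /eqP->.
    by apply: allpairs_f; rewrite mem_enum.
  case: (HW'b _ Hin) => //= H; exfalso; move/negP: HnB; apply; exact/BP.
pose f := fun ix : 'I_chi * 'I_m => nth x0 (enum (W' (g ix.1))) ix.2.
have Hfin : forall ix, f ix \in W' (g ix.1).
  move=> [i x]; rewrite /f /= -mem_enum; apply: mem_nth.
  by rewrite -cardE; apply: leq_trans (HW'c _); exact: ltn_ord.
have Hfinj : injective f.
  move=> [i x] [j y] Hf.
  have Hij : i = j.
    apply/eqP; apply/negP => /negP Hij.
    have Hgij : g i != g j by apply/negP => /eqP /Hg /eqP; rewrite (negbTE Hij).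
    have Hd := Hdis _ _ Hgij.
    have H1 := subsetP (HW' (g i)) _ (Hfin (i, x)).
    have H2 := subsetP (HW' (g j)) _ (Hfin (j, y)).
    move: Hd; rewrite -setI_eq0 => /eqP Hd.
    have : f (i, x) \in W (g i) :&: W (g j) by rewrite inE H1 Hf H2.
    by rewrite Hd inE.
  subst j; congr (_, _); move: Hf; rewrite /f /= => /eqP.
  rewrite nth_uniq ?enum_uniq // -?cardE; last 2 first.
  - by apply: leq_trans (HW'c _); exact: ltn_ord.
  - by apply: leq_trans (HW'c _); exact: ltn_ord.
  by move/eqP/val_inj.
exists f; split => // i j x y z Hij Hxy.
apply: (Hbl i j Hij) => //; try exact: (Hfin (_, _)).
by apply/negP => /eqP /Hfinj [] /eqP; rewrite (negbTE Hxy).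
Qed.

Lemma split_last (T : eqType) (a : pred T) (x : T) (s : seq T) :
  exists s1 s2, [/\ s = s1 ++ s2, ~~ has a s2 & (s1 = [::] \/ a (last x s1))].
Proof.
elim/last_ind: s => [|s z [s1 [s2 [Hs Hn Hl]]]]; first by exists [::], [::]; split; auto.
case Hz: (a z).
  exists (rcons s z), [::]; split; rewrite ?cats0 //; right; by rewrite last_rcons.
exists s1, (rcons s2 z); split => //.
- by rewrite Hs rcons_cat.
- by rewrite -cats1 has_cat negb_or Hn /= Hz.
Qed.

Section Cyc.
Variable (T : finType) (G : rel T).
Hypothesis Gsym : symmetric G.
Hypothesis Girr : irreflexive G.

Definition gcycle (c : seq T) := (size c == 1) || cycle G c.

Lemma uniq_size_U (U : {set T}) (s : seq T) : uniq s -> {subset s <= U} -> size s <= #|U|.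
Proof.
move=> Hu Hs; rewrite cardE; apply: uniq_leq_size => // z Hz; rewrite mem_enum; exact: Hs.
Qed.

Lemma maxpath (U : {set T}) n : forall (x : T) (p : seq T), #|U| - size (x :: p) <= n ->
  x \in U -> {subset p <= U} -> uniq (x :: p) -> path G x p ->
  exists x' p', [/\ x' \in U, {subset p' <= U}, uniq (x' :: p'), path G x' p' &
                 forall y, y \in U -> G x' y -> y \in x' :: p'].
Proof.
elim: n => [|n IH] x p Hn HxU HpU Hu Hp.
  exists x, p; split => // y HyU Hxy; apply/negPn/negP => Hy.
  have : size (y :: x :: p) <= #|U|.
    apply: uniq_size_U; first by rewrite cons_uniq Hy Hu.
    by move=> z; rewrite in_cons => /orP[/eqP->//|]; rewrite in_cons => /orP[/eqP->//|/HpU].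
  move: Hn; rewrite /= => Hn Hle; lia.
case: (boolP [exists y in U, G x y && (y \notin x :: p)]) => [/existsP[y /and3P[HyU Hxy Hy]]|Hno].
  apply: (IH y (x :: p)) => //.
  - move: Hn; rewrite /=. lia.
  - by move=> z; rewrite in_cons => /orP[/eqP->//|/HpU].
  - by rewrite cons_uniq Hy Hu.
  - by rewrite /= Gsym Hxy Hp.
exists x, p; split => // y HyU Hxy; apply/negPn/negP => Hy.
move/existsP: Hno; apply; exists y; by rewrite HyU Hxy Hy.
Qed.

Lemma cyc_exists r : forall U : {set T},
  (forall S : {set T}, S \subset U -> r < #|S| -> exists x y, [/\ x \in S, y \in S & G x y]) ->
  U != set0 ->
  exists c : seq T, [/\ uniq c, {subset c <= U}, c != [::], gcycle c & #|U| <= size c * r].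
Proof.
elim: r => [|r IH] U HU HU0.
  case/set0Pn: HU0 => u Hu.
  have H1 : [set u] \subset U by rewrite sub1set.
  have H2 : 0 < #|[set u]| by rewrite cards1.
  have [x [y [Hx Hy Hxy]]] := HU [set u] H1 H2.
  move: Hx Hy Hxy; rewrite !inE => /eqP-> /eqP->; by rewrite Girr.
case/set0Pn: HU0 => u Hu.
have Hnil : {subset [::] <= U} by [].
have [x' [p' [Hx'U Hp'U Hu' Hp' Hmax]]] :=
  maxpath (n := #|U|) (p := [::]) (leq_subr _ _) Hu Hnil (erefl _) (erefl _).
have [s1 [s2 [Hs Hn Hl]]] := split_last (G x') x' p'.
pose C := x' :: s1.
have HCu : uniq C by move: Hu'; rewrite Hs /C -cat_cons cat_uniq => /andP[].
have HCU : {subset C <= U}.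
  move=> z; rewrite in_cons => /orP[/eqP->//|Hz]; apply: Hp'U; by rewrite Hs mem_cat Hz.
have HCcyc : gcycle C.
  rewrite /C; case: Hl => [->|Hl]; first by rewrite /gcycle.
  apply/orP; right; rewrite /= rcons_path; apply/andP; split.
    by move: Hp'; rewrite Hs cat_path => /andP[].
  by rewrite Gsym.
have HCcard : #|[set z in C]| = size C by rewrite cardsE; apply/card_uniqP.
pose U' := U :\: [set z in C].
have HUc : #|U| <= #|U'| + size C.
  by rewrite -HCcard /U' cardsD; have := subset_leq_card (subsetIr U [set z in C]); lia.
case: (boolP (U' == set0)) => [/eqP HU'0|HU'0].
  exists C; split => //; move: HUc; rewrite HU'0 cards0 add0n => H.
  by apply: leq_trans H _; rewrite mulnS leq_addr.
have HU' : forall S : {set T}, S \subset U' -> r < #|S| -> exists x y, [/\ x \in S, y \in S & G x y].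
  move=> S HS HSr.
  have Hx'S : x' \notin S.
    by apply/negP => /(subsetP HS); rewrite inE inE /C mem_head.
  have H1 : x' |: S \subset U.
    rewrite subUset sub1set Hx'U; apply: subset_trans HS (subsetDl _ _).
  have H2 : r.+1 < #|x' |: S| by rewrite cardsU1 Hx'S.
  have [x [y [Hx Hy Hxy]]] := HU (x' |: S) H1 H2.
  have Hnb : forall z, z \in S -> ~~ G x' z.
    move=> z Hz; apply/negP => Hz'.
    have HzU : z \in U by move: (subsetP HS _ Hz); rewrite inE => /andP[].
    have := Hmax z HzU Hz'; rewrite in_cons Hs mem_cat => /or3P[/eqP Ezx|Hz1|Hz2].
    - by move: Hz'; rewrite Ezx Girr.
    - by move: (subsetP HS _ Hz); rewrite !inE /C ?in_cons Hz1 ?orbT.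
    - by move/negP: Hn; apply; apply/hasP; exists z.
  move: Hx Hy; rewrite !in_setU1 => /orP[/eqP Ex|Hx] /orP[/eqP Ey|Hy].
  - by move: Hxy; rewrite Ex Ey Girr.
  - by move: Hxy; rewrite Ex (negbTE (Hnb y Hy)).
  - by move: Hxy; rewrite Ey Gsym (negbTE (Hnb x Hx)).
  - by exists x, y.
have [C' [HC'u HC'U HC'0 HC'cyc HC'c]] := IH U' HU' HU'0.
have HC'U0 : {subset C' <= U}.
  by move=> z /HC'U; rewrite inE => /andP[].
case: (leqP (size C') (size C)) => Hsz.
  exists C; split => //.
  have := leq_mul (leqnn r) Hsz; rewrite mulnC (mulnC r) mulnS; lia.
exists C'; split => //.
rewrite mulnS; lia.
Qed.

End Cyc.

Section CI.
Variable p : nat.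

Definition CIn (s l : nat) : {set 'I_p} := [set z : 'I_p | (z + p - s) %% p < l].

Lemma rotE s (z : 'I_p) : s < p ->
  (z + p - s) %% p = if s <= z then z - s else z + p - s.
Proof.
move=> Hs; have Hz := ltn_ord z.
case: (leqP s z) => H.
  have -> : z + p - s = (z - s) + p by lia.
  by rewrite modnDr modn_small //; lia.
by rewrite modn_small //; lia.
Qed.

Lemma memCI s l (z : 'I_p) : s < p -> l <= p ->
  (z \in CIn s l) = ((s <= z) && (z < s + l)) || (z + p < s + l).
Proof.
move=> Hs Hl; have Hz := ltn_ord z.
rewrite inE rotE //; case: (leqP s z) => H; apply/idP/idP; lia.
Qed.

Lemma cardCI s l : s < p -> l <= p -> #|CIn s l| = l.
Proof.
move=> Hs Hl.
have Hp : 0 < p by lia.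
pose r := fun z : 'I_p => Ordinal (ltn_pmod (z + p - s) Hp).
have Hr : injective r.
  move=> z z' /(congr1 val) /=; rewrite !rotE //.
  have := ltn_ord z; have := ltn_ord z' => H1 H2.
  move=> E; apply: val_inj => /=; move: E.
  by case: (leqP s z) => ?; case: (leqP s z') => ?; lia.
have -> : CIn s l = r @^-1: [set i : 'I_p | i < l].
  by apply/setP => z; rewrite !inE.
rewrite card_preimset //.
have Hw : injective (widen_ord Hl) by move=> i j /(congr1 val) /= /val_inj.
have -> : [set i : 'I_p | i < l] = widen_ord Hl @: [set: 'I_l].
  apply/setP => i; rewrite inE; apply/idP/imsetP.
  - move=> Hi; exists (Ordinal Hi); rewrite ?inE //; exact: val_inj.
  - by case=> j _ ->; rewrite /= ltn_ord.
by rewrite card_imset // cardsT card_ord.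
Qed.

Lemma CI_cyc s l : s < p -> cyc_interval (CIn s l).
Proof. move=> Hs; by exists (Ordinal Hs), l. Qed.

End CI.

Lemma card2n p (c1 c2 : nat) : c1 < p -> c2 < p -> c1 != c2 ->
  #|[set z : 'I_p | ((z : nat) == c1) || ((z : nat) == c2)]| = 2.
Proof.
move=> H1 H2 H12.
have -> : [set z : 'I_p | ((z : nat) == c1) || ((z : nat) == c2)] = [set Ordinal H1; Ordinal H2].
  by apply/setP => z; rewrite !inE.
by rewrite cards2; case: eqP => // /(congr1 val) /= E; rewrite E eqxx in H12.
Qed.

Lemma divn_eqa (a M z : nat) : a * M <= z -> z < a * M + M -> z %/ M = a.
Proof.
move=> H1 H2; have HM : 0 < M by lia.
have -> : z = a * M + (z - a * M) by lia.
rewrite divnMDl // divn_small; [by rewrite addn0 | lia].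
Qed.

Lemma modn_eqa (a M z : nat) : a * M <= z -> z < a * M + M -> z %% M = z - a * M.
Proof.
move=> H1 H2.
have -> : z = a * M + (z - a * M) by lia.
rewrite modnMDl modn_small; lia.
Qed.

Lemma decomp3 k j : j < 3 * k -> exists a r, [/\ a < k, r < 3 & j = 3 * a + r].
Proof.
move=> Hj; exists (j %/ 3), (j %% 3); split.
- by rewrite ltn_divLR // mulnC.
- by rewrite ltn_mod.
- by rewrite {1}(divn_eq j 3) mulnC.
Qed.

Lemma prv_nxt k a : a < k -> (((a.+1) %% k) + k.-1) %% k = a.
Proof.
move=> Ha; case: (ltngtP a.+1 k) => H.
- rewrite (modn_small H).
  have -> : a.+1 + k.-1 = a + k by lia.
  by rewrite modnDr modn_small.
- lia.
- rewrite -H modnn add0n modn_small; lia.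
Qed.

Section Chain.
Variables (n : nat) (col : colouring n) (M k : nat) (x0 : 'I_n).
Hypothesis HM : 8 <= M.
Hypothesis Hk : 0 < k.
Variables (B : nat -> {set 'I_n}) (x y u w : nat -> 'I_n).

Definition nxt a := (a.+1) %% k.
Definition prv a := (a + k.-1) %% k.

Hypothesis HBc : forall a, a < k -> #|B a| = M.
Hypothesis HBd : forall a b, a < k -> b < k -> a != b -> [disjoint B a & B b].
Hypothesis HBr : forall a, a < k -> forall a1 b1 c1, a1 \in B a -> b1 \in B a -> c1 \in B a ->
  a1 != b1 -> a1 != c1 -> b1 != c1 -> col [set a1; b1; c1].
Hypothesis Hxy : forall a, a < k -> [/\ x a \in B a, y a \in B a, u (prv a) \in B a,
  w (prv a) \in B a & uniq [:: u (prv a); w (prv a); x a; y a]].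
Hypothesis HL : forall a, a < k -> red4 col [set x a; y a; u a; w a].

Definition Q4 a := [set u (prv a); w (prv a); x a; y a].
Definition sq a := [:: u (prv a); w (prv a)] ++ enum (B a :\: Q4 a) ++ [:: x a; y a].

Lemma Q4_card a : a < k -> #|Q4 a| = 4.
Proof.
move=> Ha; have [_ _ _ _ Hu] := Hxy Ha.
have -> : Q4 a = [set z in [:: u (prv a); w (prv a); x a; y a]].
  by apply/setP => z; rewrite !inE !orbA.
by rewrite cardsE; apply/card_uniqP.
Qed.

Lemma Q4_sub a : a < k -> Q4 a \subset B a.
Proof.
move=> Ha; have [H1 H2 H3 H4 _] := Hxy Ha.
by apply/subsetP => z; rewrite !inE => /orP[/orP[/orP[]|]|] /eqP->.
Qed.

Lemma sq_size a : a < k -> size (sq a) = M.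
Proof.
move=> Ha; rewrite /sq !size_cat /= -cardE cardsD (setIidPr (Q4_sub Ha)) Q4_card // HBc //.
lia.
Qed.

Lemma sq_uniq a : a < k -> uniq (sq a).
Proof.
move=> Ha; have [_ _ _ _ Hu] := Hxy Ha.
rewrite /sq (perm_uniq (introT permPl (perm_catCA [:: u (prv a); w (prv a)] _ _))).
rewrite cat_uniq enum_uniq; apply/and3P; split => //.
  apply/hasPn => z Hz; rewrite mem_enum !inE negb_and negbK.
  have Hz' : z \in [:: u (prv a); w (prv a); x a; y a] by [].
  apply/orP; left; move: Hz'; rewrite /Q4 !inE => /or4P[] /eqP->; by rewrite ?eqxx ?orbT.
Qed.

Lemma sq_sub a z : a < k -> z \in sq a -> z \in B a.
Proof.
move=> Ha; have [H1 H2 H3 H4 _] := Hxy Ha.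
rewrite /sq !mem_cat mem_enum => /orP[|/orP[]].
- by rewrite !inE => /orP[]/eqP->.
- by rewrite inE => /andP[].
- by rewrite !inE => /orP[]/eqP->.
Qed.

Lemma HM0 : 0 < M. Proof. lia. Qed.

Definition vv (z : 'I_(k * M)) : 'I_n := nth x0 (sq (z %/ M)) (z %% M).

Lemma vv_in (z : 'I_(k * M)) : z %/ M < k /\ vv z \in B (z %/ M).
Proof.
have Hz : z %/ M < k by rewrite ltn_divLR ?HM0 //; exact: ltn_ord.
split => //; apply: (sq_sub Hz); apply: mem_nth; rewrite sq_size //; exact: ltn_pmod HM0.
Qed.

Lemma vv_inj : injective vv.
Proof.
move=> z z' E.
have [Hz Hzin] := vv_in z; have [Hz' Hz'in] := vv_in z'.
have Ea : z %/ M = z' %/ M.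
  apply/eqP; apply/negP => /negP Hne.
  have := HBd Hz Hz' Hne; rewrite -setI_eq0 => /eqP Hd.
  have : vv z \in B (z %/ M) :&: B (z' %/ M) by rewrite inE Hzin E Hz'in.
  by rewrite Hd inE.
move: E; rewrite /vv Ea => /eqP; rewrite nth_uniq ?sq_uniq ?sq_size ?ltn_pmod ?HM0 //.
move=> /eqP Em; apply: val_inj => /=.
by rewrite (divn_eq z M) (divn_eq z' M) Ea Em.
Qed.

Lemma vvE (z : 'I_(k * M)) a r : a < k -> r < M -> (z : nat) = a * M + r -> vv z = nth x0 (sq a) r.
Proof.
move=> Ha Hr Hz; rewrite /vv Hz divnMDl ?HM0 // divn_small // addn0 modnMDl modn_small //.
Qed.

Lemma sq0 a : a < k -> nth x0 (sq a) 0 = u (prv a). Proof. by []. Qed.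
Lemma sq1 a : a < k -> nth x0 (sq a) 1 = w (prv a). Proof. by []. Qed.
Lemma sqs a : a < k -> size (enum (B a :\: Q4 a)) = M - 4.
Proof. by move=> Ha; have := sq_size Ha; rewrite /sq !size_cat /=; lia. Qed.

Lemma sqM2 a : a < k -> nth x0 (sq a) (M - 2) = x a.
Proof.
move=> Ha; rewrite /sq (_ : M - 2 = (M - 4).+2); last lia.
by rewrite /= nth_cat sqs // ltnn subnn.
Qed.
Lemma sqM1 a : a < k -> nth x0 (sq a) (M - 1) = y a.
Proof.
move=> Ha; rewrite /sq (_ : M - 1 = (M - 4).+3); last lia.
by rewrite /= nth_cat sqs // ltnNge leqnSn /= subSn // subnn.
Qed.

Definition hh := M %/ 2.
Lemma hh_facts : 4 <= hh /\ hh * 2 <= M /\ M <= hh * 2 + 1.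
Proof. rewrite /hh; have := divn_eq M 2; have := ltn_pmod M (isT : 0 < 2); lia. Qed.

Definition II (j : nat) : {set 'I_(k * M)} :=
  if j %% 3 == 0 then CIn (k * M) ((j %/ 3) * M) (hh + 1)
  else if j %% 3 == 1 then CIn (k * M) ((j %/ 3) * M + hh - 1) (M - hh + 1)
  else CIn (k * M) ((j %/ 3) * M + M - 2) 4.

Lemma div3E a r : r < 3 -> (3 * a + r) %/ 3 = a /\ (3 * a + r) %% 3 = r.
Proof.
move=> Hr; rewrite [3 * a]mulnC divnMDl // divn_small // addn0 modnMDl modn_small //.
Qed.

Lemma II0 a : II (3 * a) = CIn (k * M) (a * M) (hh + 1).
Proof. by rewrite /II -(addn0 (3 * a)); have [-> ->] := div3E a (isT : 0 < 3). Qed.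
Lemma II1 a : II (3 * a + 1) = CIn (k * M) (a * M + hh - 1) (M - hh + 1).
Proof. by rewrite /II; have [-> ->] := div3E a (isT : 1 < 3). Qed.
Lemma II2 a : II (3 * a + 2) = CIn (k * M) (a * M + M - 2) 4.
Proof. by rewrite /II; have [-> ->] := div3E a (isT : 2 < 3). Qed.

Lemma blockM a : a < k -> a * M + M <= k * M.
Proof. move=> Ha; have := leq_mul Ha (leqnn M); rewrite mulSn; lia. Qed.

Lemma blockM2 a : a.+1 < k -> a * M + M + M <= k * M.
Proof. move=> Ha; have := leq_mul Ha (leqnn M); rewrite !mulSn; lia. Qed.

Lemma prv_S a : a.+1 < k -> prv a.+1 = a.
Proof.
move=> Ha; rewrite /prv (_ : a.+1 + k.-1 = a + k); last lia.
by rewrite modnDr modn_small //; lia.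
Qed.

Lemma prv_0 : prv 0 = k.-1.
Proof. by rewrite /prv add0n modn_small //; lia. Qed.

Lemma mem0 a (z : 'I_(k * M)) : a < k ->
  (z \in II (3 * a)) = (a * M <= z) && (z < a * M + hh + 1).
Proof.
move=> Ha; have HA := blockM Ha; have [Hh1 [Hh2 Hh3]] := hh_facts; have Hz := ltn_ord z.
rewrite II0 memCI; try lia; apply/idP/idP; lia.
Qed.

Lemma mem1 a (z : 'I_(k * M)) : a < k ->
  (z \in II (3 * a + 1)) = (a * M + hh - 1 <= z) && (z < a * M + M).
Proof.
move=> Ha; have HA := blockM Ha; have [Hh1 [Hh2 Hh3]] := hh_facts; have Hz := ltn_ord z.
rewrite II1 memCI; try lia; apply/idP/idP; lia.
Qed.

Lemma mem2 a (z : 'I_(k * M)) : a < k ->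
  (z \in II (3 * a + 2)) = ((a * M + M - 2 <= z) && (z < a * M + M + 2)) || (z + k * M < a * M + M + 2).
Proof.
move=> Ha; have HA := blockM Ha; have [Hh1 [Hh2 Hh3]] := hh_facts; have Hz := ltn_ord z.
rewrite II2 memCI; try lia; apply/idP/idP; lia.
Qed.

Lemma decomp_j j : j < 3 * k -> exists a, a < k /\ [\/ j = 3 * a, j = 3 * a + 1 | j = 3 * a + 2].
Proof.
move=> /decomp3 [a [r [Ha Hr ->]]]; exists a; split => //.
by case: r Hr => [|[|[|r]]] // _; [constructor 1; rewrite addn0 | constructor 2 | constructor 3].
Qed.

Lemma II_cyc j : j < 3 * k -> cyc_interval (II j).
Proof.
move=> /decomp_j [a [Ha [->|->|->]]]; have HA := blockM Ha; have [Hh1 [Hh2 Hh3]] := hh_facts.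
- rewrite II0; apply: CI_cyc; lia.
- rewrite II1; apply: CI_cyc; lia.
- rewrite II2; apply: CI_cyc; lia.
Qed.

Lemma II_card0 a : a < k -> #|II (3 * a)| = hh + 1.
Proof. move=> Ha; have HA := blockM Ha; have [Hh1 [Hh2 Hh3]] := hh_facts; rewrite II0 cardCI //; lia. Qed.
Lemma II_card1 a : a < k -> #|II (3 * a + 1)| = M - hh + 1.
Proof. move=> Ha; have HA := blockM Ha; have [Hh1 [Hh2 Hh3]] := hh_facts; rewrite II1 cardCI //; lia. Qed.
Lemma II_card2 a : a < k -> #|II (3 * a + 2)| = 4.
Proof. move=> Ha; have HA := blockM Ha; have [Hh1 [Hh2 Hh3]] := hh_facts; rewrite II2 cardCI //; lia. Qed.

Lemma card_eq2 (S : {set 'I_(k * M)}) c1 c2 : c1 < k * M -> c2 < k * M -> c1 != c2 ->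
  (forall z : 'I_(k * M), (z \in S) = ((z : nat) == c1) || ((z : nat) == c2)) -> #|S| = 2.
Proof.
move=> H1 H2 H12 HS; rewrite -(card2n H1 H2 H12).
by apply: eq_card => z; rewrite HS inE.
Qed.

Lemma II_inter j : j < 3 * k -> #|II j :&: II (j.+1 %% (3 * k))| = 2.
Proof.
move=> Hj; have [a [Ha Hj']] := decomp_j Hj.
have HA := blockM Ha; have [Hh1 [Hh2 Hh3]] := hh_facts.
case: Hj' => Ej; subst j.
- rewrite modn_small; last lia.
  apply: (@card_eq2 _ (a * M + hh - 1) (a * M + hh)); try lia.
  move=> z; rewrite in_setI (_ : (3 * a).+1 = 3 * a + 1); last lia. rewrite mem0 // mem1 //.
  have Hz := ltn_ord z; apply/idP/idP; lia.
- rewrite modn_small; last lia.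
  apply: (@card_eq2 _ (a * M + M - 2) (a * M + M - 1)); try lia.
  move=> z; rewrite in_setI mem1 // (_ : (3 * a + 1).+1 = 3 * a + 2); last lia.
  rewrite mem2 //.
  have Hz := ltn_ord z; apply/idP/idP; lia.
- case: (ltngtP a.+1 k) => Hak; last first.
  + rewrite (_ : (3 * a + 2).+1 = 3 * k); last lia.
    have Hak' : a * M + M = k * M by rewrite -Hak mulSn; lia.
    rewrite modnn; apply: (@card_eq2 _ 0 1); try lia.
    move=> z; rewrite in_setI mem2 // -(muln0 3) mem0 //.
    have Hz := ltn_ord z; apply/idP/idP; lia.
  + lia.
  + have HA2 := blockM2 Hak.
    rewrite (_ : (3 * a + 2).+1 = 3 * a.+1); last lia.
    rewrite modn_small; last lia.
    apply: (@card_eq2 _ (a * M + M) (a * M + M + 1)); try lia.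
    move=> z; rewrite in_setI mem2 // mem0 // mulSn.
    have Hz := ltn_ord z; apply/idP/idP; lia.
Qed.

Lemma II_cover (z : 'I_(k * M)) : exists2 j, j < 3 * k & z \in II j.
Proof.
have [Ha _] := vv_in z; set a := z %/ M in Ha.
have HA := blockM Ha; have [Hh1 [Hh2 Hh3]] := hh_facts.
have Hz1 : a * M <= z by rewrite /a leq_divM.
have Hz2 : z < a * M + M by rewrite /a {1}(divn_eq z M) ltn_add2l ltn_pmod ?HM0.
case: (ltnP z (a * M + hh + 1)) => Hz.
  exists (3 * a); first lia.
  by rewrite mem0 //; apply/andP.
exists (3 * a + 1); first lia.
rewrite mem1 //; apply/andP; split; lia.
Qed.

Lemma II_red j : j < 3 * k -> forall a1 b1 c1 : 'I_(k * M), a1 \in II j -> b1 \in II j -> c1 \in II j ->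
  a1 != b1 -> a1 != c1 -> b1 != c1 -> col [set vv a1; vv b1; vv c1].
Proof.
move=> /decomp_j [a [Ha Hj]].
have HA := blockM Ha; have [Hh1 [Hh2 Hh3]] := hh_facts.
have Hne : forall z z' : 'I_(k * M), z != z' -> vv z != vv z'.
  by move=> z z'; apply: contra => /eqP /vv_inj ->.
have Hblk : forall z : 'I_(k * M), a * M <= z -> z < a * M + M -> vv z \in B a.
  by move=> z H1 H2; have [_] := vv_in z; rewrite (divn_eqa H1 H2).
case: Hj => ->.
- move=> a1 b1 c1; rewrite !mem0 // => /andP[? ?] /andP[? ?] /andP[? ?] H1 H2 H3.
  apply: (HBr Ha); rewrite ?Hne //; apply: Hblk; lia.
- move=> a1 b1 c1; rewrite !mem1 // => /andP[? ?] /andP[? ?] /andP[? ?] H1 H2 H3.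
  apply: (HBr Ha); rewrite ?Hne //; apply: Hblk; lia.
have Hq : forall z : 'I_(k * M), z \in II (3 * a + 2) -> vv z \in [set x a; y a; u a; w a].
  move=> z; rewrite mem2 // => Hz.
  have HzM := ltn_ord z.
  have [E|[E|Hz']] : (z : nat) = a * M + (M - 2) \/ (z : nat) = a * M + (M - 1) \/
                     (z + k * M < a * M + M + 2 \/ a * M + M <= z).
  - lia.
  - by rewrite (vvE Ha _ E) ?sqM2 //; [rewrite !inE eqxx | lia].
  - by rewrite (vvE Ha _ E) ?sqM1 //; [rewrite !inE eqxx ?orbT | lia].
  case: (ltngtP a.+1 k) => Hak.
  - have HA2 := blockM2 Hak.
    have E : (z : nat) = a.+1 * M + (z - a.+1 * M) by rewrite mulSn; lia.
    rewrite (vvE Hak _ E); last by rewrite mulSn; lia.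
    have [E0|E1] : z - a.+1 * M = 0 \/ z - a.+1 * M = 1 by rewrite mulSn; lia.
    + by rewrite E0 sq0 // prv_S // !inE eqxx ?orbT.
    + by rewrite E1 sq1 // prv_S // !inE eqxx ?orbT.
  - lia.
  - have Hak' : a * M + M = k * M by rewrite -Hak mulSn; lia.
    have E : (z : nat) = 0 * M + z by rewrite mul0n.
    rewrite (vvE Hk _ E); last lia.
    have [E0|E1] : (z : nat) = 0 \/ (z : nat) = 1 by lia.
    + by rewrite E0 sq0 // prv_0 (_ : k.-1 = a); last lia; rewrite !inE eqxx ?orbT.
    + by rewrite E1 sq1 // prv_0 (_ : k.-1 = a); last lia; rewrite !inE eqxx ?orbT.
move=> a1 b1 c1 Ha1 Hb1 Hc1 H1 H2 H3.
apply: (HL Ha); rewrite ?Hq ?Hne //.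
Qed.

Lemma II_spine : #|spine_set (3 * k) II| <= 6 * k.
Proof.
have Hsub : spine_set (3 * k) II \subset \bigcup_(j : 'I_(3 * k)) (II j :&: II (j.+1 %% (3 * k))).
  apply/subsetP => z; rewrite inE => /existsP [j Hj].
  by apply/bigcupP; exists j.
apply: leq_trans (subset_leq_card Hsub) _.
apply: leq_trans (card_cup_le _ _ _) _.
rewrite (eq_bigr (fun _ => 2)); last by move=> j _; rewrite II_inter.
rewrite sum_nat_const card_ord; lia.
Qed.

Lemma chain_ok : red_closed_chain col vv (3 * k) II /\
  (forall j, j < 3 * k -> flexible_elem vv II j -> M <= 2 * #|chain_elem vv II j|) /\
  #|spine_set (3 * k) II| <= 6 * k.
Proof.
have [Hh1 [Hh2 Hh3]] := hh_facts.
split; last split.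
- split; first exact: vv_inj.
  split; first lia.
  split; first exact: II_cyc.
  split.
    move=> j /decomp_j [a [Ha [->|->|->]]];
      by rewrite ?II_card0 ?II_card1 ?II_card2 //; lia.
  split; first exact: II_inter.
  split; first by move=> z; have [j Hj Hz] := II_cover z; exists j.
  exact: II_red.
- move=> j /decomp_j [a [Ha [->|->|->]]]; rewrite /flexible_elem /chain_elem card_imset;
    try exact: vv_inj; rewrite ?II_card0 ?II_card1 ?II_card2 //; lia.
- exact: II_spine.
Qed.

End Chain.

From Stdlib Require Import Classical_Prop.

Lemma set4_swap (T : finType) (x y u w : T) : [set x; y; u; w] = [set u; w; x; y].
Proof.
apply/setP => z; rewrite !inE.
by case: (z == x); case: (z == y); case: (z == u); case: (z == w).
Qed.

Lemma noK4_sym (V : finType) (col : {set V} -> bool) X Y : noK4 col X Y -> noK4 col Y X.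
Proof.
move=> H u w x y Hu Hw Hx Hy Huw Hxy; rewrite set4_swap; exact: H.
Qed.

Lemma cap_card (T : finType) (I : eqType) (s : seq I) (P : pred I) (F : I -> {set T}) (A : {set T}) :
  #|A| <= #|A :&: \bigcap_(i <- s | P i) F i| + \sum_(i <- s | P i) #|A :\: F i|.
Proof.
elim: s => [|i s IH]; first by rewrite !big_nil setIT addn0.
rewrite !big_cons; case: (P i) => //.
set C := \bigcap_(i <- s | P i) F i in IH *.
have H1 : #|A :&: C| <= #|A :&: (F i :&: C)| + #|A :\: F i|.
  have -> : A :&: C = (A :&: (F i :&: C)) :|: ((A :&: C) :\: F i).
    apply/setP => z; rewrite !inE; by case: (z \in A); case: (z \in F i); case: (z \in C).
  apply: leq_trans (leq_card_setU _ _) _; rewrite leq_add2l.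
  apply: subset_leq_card; apply/subsetP => z; rewrite !inE => /andP[-> /andP[-> _]].
  by [].
lia.
Qed.

Lemma cycle_nth (T : eqType) (e : rel T) (x0 : T) (c : seq T) i :
  cycle e c -> i < size c -> e (nth x0 c i) (nth x0 c (i.+1 %% size c)).
Proof.
case: c => [|x p] //= /(pathP x0) H Hi.
have := H i; rewrite size_rcons => /(_ Hi).
rewrite -rcons_cons nth_rcons /= Hi.
case: (ltngtP i.+1 (size p).+1) => Hi'.
- rewrite modn_small // nth_rcons (_ : i < size p); last lia.
  done.
- lia.
- have Ei : i = size p by lia.
  rewrite Hi' modnn /= nth_rcons Ei ltnn eqxx.
  case: (size p) => [|j] //=; by rewrite ltnn.
Qed.

Lemma K4_of (V : finType) (col : {set V} -> bool) (X Y : {set V}) : ~ noK4 col X Y ->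
  exists x y u w, [/\ x \in X, y \in X, u \in Y, w \in Y & (x != y) && (u != w) /\ red4 col [set x; y; u; w]].
Proof.
move=> H; apply: NNPP => Hn; apply: H => x y u w Hx Hy Hu Hw Hxy Huw Hr.
by apply: Hn; exists x, y, u, w; rewrite Hxy Huw.
Qed.

Lemma card_setD2 (T : finType) (A : {set T}) (a b : T) : #|A| - 2 <= #|A :\: [set a; b]|.
Proof.
rewrite cardsD; have := subset_leq_card (subsetIr A [set a; b]).
have := cards2 a b; case: (a != b) => /= H; lia.
Qed.

Section Links.
Variables (n t M : nat) (col : colouring n) (P : 'I_t -> {set 'I_n}).
Hypothesis HPc : forall i, #|P i| = M.

Definition linked i j := forall X Y : {set 'I_n}, X \subset P i -> Y \subset P j ->
  M - 2 <= #|X| -> M - 2 <= #|Y| -> ~ noK4 col X Y.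

Definition link_ok k (q : nat -> 'I_t) (x y u w : nat -> 'I_n) a :=
  [/\ [/\ x a \in P (q a), y a \in P (q a), u a \in P (q (nxt k a)) & w a \in P (q (nxt k a))],
      (x a != y a) && (u a != w a), red4 col [set x a; y a; u a; w a],
      (0 < a -> (x a \notin [set u a.-1; w a.-1]) && (y a \notin [set u a.-1; w a.-1])) &
       (a = k.-1 -> (u a \notin [set x 0; y 0]) && (w a \notin [set x 0; y 0]))].

Lemma links k (q : nat -> 'I_t) (i0 : 'I_n) : 1 < k ->
  (forall a, a < k -> linked (q a) (q (nxt k a))) ->
  exists x y u w : nat -> 'I_n, forall a, a < k -> link_ok k q x y u w a.
Proof.
move=> Hk Hl.
suff : forall j, j <= k -> exists x y u w : nat -> 'I_n, forall a, a < j -> link_ok k q x y u w a.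
  by move/(_ k (leqnn k)).
elim => [|j IH] Hj.
  by exists (fun _ => i0), (fun _ => i0), (fun _ => i0), (fun _ => i0).
have [x [y [u [w Hok]]]] := IH (ltnW Hj).
pose X := P (q j) :\: (if 0 < j then [set u j.-1; w j.-1] else set0).
pose Y := P (q (nxt k j)) :\: (if j == k.-1 then [set x 0; y 0] else set0).
have HX : X \subset P (q j) by exact: subsetDl.
have HY : Y \subset P (q (nxt k j)) by exact: subsetDl.
have HXc : M - 2 <= #|X|.
  rewrite /X -(HPc (q j)); case: (0 < j); last by rewrite setD0; lia.
  exact: card_setD2.
have HYc : M - 2 <= #|Y|.
  rewrite /Y -(HPc (q (nxt k j))); case: (j == k.-1); last by rewrite setD0; lia.
  exact: card_setD2.
have [x' [y' [u' [w' [Hx Hy Hu Hw [/andP[Hxy Huw] Hr]]]]]] := K4_of (Hl j Hj X Y HX HY HXc HYc).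
exists (fun a => if a == j then x' else x a), (fun a => if a == j then y' else y a),
       (fun a => if a == j then u' else u a), (fun a => if a == j then w' else w a).
move=> a Ha.
case: (ltngtP a j) => Haj.
- have Hne : a == j = false by apply/negbTE; rewrite neq_ltn Haj.
  have Hne0 : (0 == j) = false by apply/negbTE; lia.
  have Hne1 : (a.-1 == j) = false by apply/negbTE; lia.
  rewrite /link_ok !Hne Hne1 Hne0; exact: Hok a Haj.
- lia.
- subst a; rewrite /link_ok eqxx; split.
  + split; [exact: (subsetP HX) | exact: (subsetP HX) | exact: (subsetP HY) | exact: (subsetP HY)].
  + by rewrite Hxy Huw.
  + exact: Hr.
  + move=> Hj0; have Hne1 : (j.-1 == j) = false by apply/negbTE; lia.
      rewrite Hne1.
      by move: Hx Hy; rewrite /X Hj0 !inE => /andP[-> _] /andP[-> _].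
  + move=> Hjk; have Hne0 : (0 == j) = false by apply/negbTE; lia.
      rewrite Hne0.
      by move: Hu Hw; rewrite /Y Hjk eqxx !inE => /andP[-> _] /andP[-> _].
Qed.

End Links.

From Stdlib Require Import Classical_Prop.
From mathcomp Require Import boolp.

Lemma bigcap_seq_mem (T : finType) (I : eqType) (s : seq I) (Pp : pred I) (F : I -> {set T}) z i :
  z \in \bigcap_(j <- s | Pp j) F j -> i \in s -> Pp i -> z \in F i.
Proof.
elim: s => [|j s IH] //; rewrite big_cons in_cons.
case Hj: (Pp j) => Hz /orP[/eqP Eij|Hi] Hp.
- by subst; move: Hz; rewrite inE => /andP[].
- by apply: IH => //; move: Hz; rewrite inE => /andP[].
- by subst; rewrite Hp in Hj.
- exact: IH.
Qed.

Lemma sum_le_const (I : eqType) (s : seq I) (Pp : pred I) (f : I -> nat) c :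
  (forall i, Pp i -> f i <= c) -> \sum_(i <- s | Pp i) f i <= size s * c.
Proof.
move=> H; elim: s => [|j s IH]; first by rewrite big_nil.
rewrite big_cons /=; case Hj: (Pp j); last by apply: leq_trans IH _; rewrite mulSn leq_addl.
by rewrite mulSn; apply: leq_add => //; exact: H.
Qed.

Lemma cardD_cap (T : finType) (A X Y : {set T}) M :
  X \subset A -> Y \subset A -> #|A| = M -> M - 2 <= #|X| -> M - 2 <= #|Y| ->
  #|A :\: (X :&: Y)| <= 4.
Proof.
move=> HX HY HA H1 H2.
rewrite setDIr; apply: leq_trans (leq_card_setU _ _) _.
rewrite !cardsD (setIidPr HX) (setIidPr HY); lia.
Qed.

Section Indep.
Variables (chi m Rv n t M : nat) (col : colouring n) (P : 'I_t -> {set 'I_n}) (x0 : 'I_n).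
Hypothesis HTT : TT_forced chi Rv.
Hypothesis HnoH : ~ blue_H chi m col.
Hypothesis Pdis : forall i j, i != j -> [disjoint P i & P j].
Hypothesis Pc : forall i, #|P i| = M.
Hypothesis HMbig : iter (Rv * Rv) NPL m + 4 * Rv <= M.
Hypothesis HRv : 2 <= Rv.

Definition wprop i j (XY : {set 'I_n} * {set 'I_n}) :=
  [/\ XY.1 \subset P i, XY.2 \subset P j, M - 2 <= #|XY.1|, M - 2 <= #|XY.2| & noK4 col XY.1 XY.2].

Lemma wprop_ex i j : ~ linked M col P i j -> exists XY, wprop i j XY.
Proof.
move=> H; apply: NNPP => Hn; apply: H => X Y HX HY HXc HYc HK.
by apply: Hn; exists (X, Y).
Qed.

Lemma indep_edge (S : {set 'I_t}) : Rv <= #|S| ->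
  exists x y, [/\ x \in S, y \in S, x != y & linked M col P x y].
Proof.
move=> HS; apply: NNPP => Hno.
have Hnl : forall x y, x \in S -> y \in S -> x != y -> ~ linked M col P x y.
  by move=> x y Hx Hy Hxy Hl; apply: Hno; exists x, y.
have [i0t _] : exists i0t : 'I_t, True.
  have : 0 < #|S| by lia.
  by rewrite card_gt0 => /set0Pn [z _]; exists z.
pose h := fun a : 'I_Rv => nth i0t (enum S) a.
have Hsz : forall a : 'I_Rv, a < size (enum S) by move=> a; rewrite -cardE; apply: leq_trans HS.
have Hh_in : forall a, h a \in S by move=> a; rewrite -mem_enum; apply: mem_nth.
have Hh_inj : forall a b, a != b -> h a != h b.
  move=> a b Hab; rewrite /h nth_uniq ?enum_uniq ?Hsz //.
pose wit := fun a b => odflt (set0, set0) [pick XY | `[< wprop (h a) (h b) XY >]].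
have Hwit : forall a b, a != b -> wprop (h a) (h b) (wit a b).
  move=> a b Hab; rewrite /wit; case: pickP => [XY /asboolP //|Hnone].
  have [XY HXY] := wprop_ex (Hnl _ _ (Hh_in a) (Hh_in b) (Hh_inj a b Hab)).
  by move: (Hnone XY) => /asboolP.
pose W := fun a => P (h a) :&: \bigcap_(b <- enum 'I_Rv | b != a) ((wit a b).1 :&: (wit b a).2).
have HWP : forall a, W a \subset P (h a) by move=> a; exact: subsetIl.
have HWab : forall a b, a != b -> W a \subset (wit a b).1.
  move=> a b Hab; apply/subsetP => z; rewrite inE => /andP[_ Hz].
  have := bigcap_seq_mem Hz (mem_enum _ b); rewrite eq_sym Hab => /(_ isT).
  by rewrite inE => /andP[].
have HWba : forall a b, a != b -> W b \subset (wit a b).2.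
  move=> a b Hab; apply/subsetP => z; rewrite inE => /andP[_ Hz].
  have := bigcap_seq_mem Hz (mem_enum _ a); rewrite Hab => /(_ isT).
  by rewrite inE => /andP[].
apply: HnoH; apply: (blueH_from x0 (W := W) HTT).
- move=> a b Hab; apply: disjointWl (HWP a) _; apply: disjointWr (HWP b) _.
  exact: Pdis (Hh_inj a b Hab).
- move=> a b Hab; have [_ _ _ _ HK] := Hwit a b Hab.
  exact: noK4_sub (HWab a b Hab) (HWba a b Hab) HK.
- move=> a.
  have H1 := cap_card (enum 'I_Rv) (fun b => b != a) (fun b => (wit a b).1 :&: (wit b a).2) (P (h a)).
  have H2 : \sum_(b <- enum 'I_Rv | b != a) #|P (h a) :\: ((wit a b).1 :&: (wit b a).2)| <= size (enum 'I_Rv) * 4.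
    apply: sum_le_const => b Hba.
    have Hab : a != b by rewrite eq_sym.
    have [HX _ HXc _ _] := Hwit a b Hab.
    have [_ HY _ HYc _] := Hwit b a Hba.
    exact: cardD_cap HX HY (Pc _) HXc HYc.
  move: H1 H2; rewrite Pc size_enum_ord -/(W a) => H1 H2.
  have H3 := leq_trans H1 (leq_add (leqnn #|W a|) H2); move: (#|W a|) H3 => wa H3; lia.
Qed.

End Indep.

From mathcomp Require Import ring lra.
Section RealsAux.
Local Open Scope ring_scope.

Lemma real1 (RR : realType) (t M k Rv : nat) : (2 <= Rv)%N -> (30 <= M)%N -> (t <= k * Rv.-1)%N ->
  (t%:R * (M%:R - 30)) / (Rv%:R - 1) <= ((k * M)%:R : RR).
Proof.
move=> HR HM Ht.
have E1 : (M%:R - 30 : RR) = (M - 30)%:R by rewrite natrB.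
have E2 : (Rv%:R - 1 : RR) = (Rv.-1)%:R by rewrite -{1}(prednK (ltnW HR)) -natr1 addrK.
rewrite E1 E2 -natrM ler_pdivrMr; last by rewrite ltr0n; lia.
rewrite -natrM ler_nat.
have : (t * (M - 30) <= t * M)%N by apply: leq_mul => //; exact: leq_subr.
have := leq_mul Ht (leqnn M); nia.
Qed.

Lemma real2 (RR : realType) (eps : RR) (Neps M k s : nat) : 0 < eps -> 6 / eps < Neps%:R ->
  (Neps <= M)%N -> (s <= 6 * k)%N -> (s%:R : RR) <= eps * (k * M)%:R.
Proof.
move=> He HN HM Hs.
have H6 : 6 <= eps * M%:R.
  have : 6 / eps < M%:R by apply: lt_le_trans HN _; rewrite ler_nat.
  rewrite ltr_pdivrMr // mulrC => H; exact: ltW.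
apply: le_trans (_ : ((6 * k)%:R : RR) <= _); first by rewrite ler_nat.
rewrite !natrM.
have -> : eps * (k%:R * M%:R) = (eps * M%:R) * k%:R by ring.
by apply: ler_wpM2r => //; rewrite ler0n.
Qed.

End RealsAux.

From Stdlib Require Import Classical_Prop.
From mathcomp Require Import boolp.

Lemma Rv_ge2 chi Rv : 2 <= chi -> TT_forced chi Rv -> 2 <= Rv.
Proof.
move=> Hchi HTT; case: (leqP 2 Rv) => // HR.
have Ht : tournament (fun _ _ : 'I_1 => false).
  split => // x y; by rewrite (ord1 x) (ord1 y) eqxx.
have [g [Hg _]] := HTT 1 (ltnSE HR) _ Ht.
have i0 : 0 < chi by lia.
have i1 : 1 < chi by lia.
have E : g (Ordinal i0) = g (Ordinal i1) by rewrite (ord1 (g _)) (ord1 (g (Ordinal i1))).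
by move: (Hg _ _ E) => /(congr1 val).
Qed.

Lemma uniq4 (T : finType) (a b c d : T) : a != b -> c != d -> a \notin [set c; d] -> b \notin [set c; d] ->
  uniq [:: a; b; c; d].
Proof. by rewrite /= !inE !negb_or => -> -> /andP[-> ->] /andP[-> ->]. Qed.

Lemma uniq4' (T : finType) (a b c d : T) : a != b -> c != d -> c \notin [set a; b] -> d \notin [set a; b] ->
  uniq [:: a; b; c; d].
Proof.
rewrite /= !inE !negb_or => -> -> /andP[H1 H2] /andP[H3 H4].
by rewrite eq_sym H1 eq_sym H3 eq_sym H2 eq_sym H4.
Qed.

Lemma nxt_prv M k a : 8 <= M -> 0 < k -> a < k -> nxt k (prv k a) = a.
Proof.
move=> HM Hk Ha; case: a Ha => [|a] Ha.
  rewrite (prv_0 HM Hk) /nxt prednK // modnn //.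
rewrite (prv_S HM Hk Ha) /nxt modn_small //.
Qed.

Lemma linked_sym n t M (col : colouring n) (P : 'I_t -> {set 'I_n}) i j :
  linked M col P i j -> linked M col P j i.
Proof.
move=> H X Y HX HY HXc HYc HK; apply: (H Y X) => //; exact: noK4_sym.
Qed.

Theorem corollary5p2 (chi m Rv : nat) (RR : realType) (eps : RR) :
  2 <= chi -> 2 <= m -> (0 < eps)%R -> is_tourn_ramsey chi Rv ->
  exists M0 : nat, forall M : nat, M0 <= M ->
  forall t : nat, 1 <= t ->
  forall col : colouring (t * M), ~ blue_H chi m col ->
  forall P : 'I_t -> {set 'I_(t * M)},
    (forall i j, i != j -> [disjoint P i & P j]) ->
    (forall x, exists i, x \in P i) ->
    (forall i, #|P i| = M) ->
    (forall i a b c, a \in P i -> b \in P i -> c \in P i ->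
       a != b -> a != c -> b != c -> col [set a; b; c]) ->
  exists (p : nat) (v : 'I_p -> 'I_(t * M)) (d : nat) (I : nat -> {set 'I_p}),
    [/\ red_closed_chain col v d I,
        ((t%:R * (M%:R - 30)) / (Rv%:R - 1) <= (p%:R : RR))%R,
        (forall j, j < d -> flexible_elem v I j -> M <= 2 * #|chain_elem v I j|) &
        ((#|spine_set d I|%:R : RR) <= eps * p%:R)%R].
Proof.
move=> Hchi Hm Heps [HTT _].
have HRv := Rv_ge2 Hchi HTT.
pose Neps := Num.Def.archi_bound (6 / eps)%R.
have HNeps : (6 / eps < Neps%:R)%R.
  by apply: archi_boundP; rewrite divr_ge0 // ltW.
exists (iter (Rv * Rv) NPL m + 4 * Rv + 30 + Neps).
move=> M HM t Ht col HnoH P Pdis Pcov Pc Pred.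
have HM8 : 8 <= M by lia.
have HtM : 0 < t * M by rewrite muln_gt0; apply/andP; split; lia.
pose x0 := Ordinal HtM.
have HMbig : iter (Rv * Rv) NPL m + 4 * Rv <= M by lia.
pose G : rel 'I_t := fun i j => (i != j) && `[< linked M col P i j >].
have Gsym : symmetric G.
  move=> i j; rewrite /G eq_sym; congr andb.
  by apply/asboolP/asboolP; apply: linked_sym.
have Girr : irreflexive G by move=> i; rewrite /G eqxx.
have HU : forall S : {set 'I_t}, S \subset setT -> Rv.-1 < #|S| ->
    exists x y, [/\ x \in S, y \in S & G x y].
  move=> S _ HS.
  have HS' : Rv <= #|S| by lia.
  have [x [y [Hx Hy Hxy Hl]]] := indep_edge x0 HTT HnoH Pdis Pc HMbig HRv HS'.
  by exists x, y; split => //; rewrite /G Hxy; apply/asboolP.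
have HT0 : [set: 'I_t] != set0.
  by apply/set0Pn; exists (Ordinal Ht).
have [c [Hcu _ Hc0 Hcyc Hct]] := cyc_exists Gsym Girr HU HT0.
rewrite cardsT card_ord in Hct.
have Hk : 0 < size c by case: c Hc0 {Hcu Hcyc Hct}.
pose k := size c.
have [i0t _] : exists i0t : 'I_t, True by exists (Ordinal Ht).
pose q := fun a => nth i0t c a.
pose B := fun a => P (q a).
have Hq : forall a b, a < k -> b < k -> a != b -> q a != q b.
  by move=> a b Ha Hb Hab; rewrite /q nth_uniq.
have [x [y [u [w [Hxy HL]]]]] : exists x y u w : nat -> 'I_(t * M),
    (forall a, a < k -> [/\ x a \in B a, y a \in B a, u (prv k a) \in B a,
       w (prv k a) \in B a & uniq [:: u (prv k a); w (prv k a); x a; y a]]) /\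
    (forall a, a < k -> red4 col [set x a; y a; u a; w a]).
  case: (ltngtP k 1) => Hk1; first lia.
  -
    have Hcyc' : cycle G c by move: Hcyc; rewrite /gcycle -/k (_ : (k == 1) = false) //; apply/negbTE; lia.
    have Hlk : forall a, a < k -> linked M col P (q a) (q (nxt k a)).
      move=> a Ha; have := cycle_nth i0t Hcyc' Ha; rewrite /G => /andP[_ /asboolP].
      by rewrite /q /nxt.
    have [x [y [u [w Hok]]]] := links Pc x0 Hk1 Hlk.
    exists x, y, u, w; split => a Ha; last by have [_ _ H _ _] := Hok a Ha.
    have [[Hx Hy _ _] /andP[Hxy1 _] _ Hpos _] := Hok a Ha.
    have Hpa : prv k a < k by rewrite /prv ltn_mod.
    have [[_ _ Hu Hw] /andP[_ Huw] _ _ Hlast] := Hok (prv k a) Hpa.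
    rewrite (nxt_prv HM8 Hk Ha) in Hu Hw.
    split => //.
    case: a Ha Hx Hy Hxy1 Hpos Hu Hw Huw Hlast {Hpa} => [|a] Ha Hx Hy Hxy1 Hpos Hu Hw Huw Hlast.
    + rewrite (prv_0 HM8 Hk) in Hu Hw Huw Hlast *.
      have /andP[Hu0 Hw0] : (u k.-1 \notin [set x 0; y 0]) && (w k.-1 \notin [set x 0; y 0]).
        exact: Hlast.
      exact: uniq4.
    + rewrite (prv_S HM8 Hk Ha) in Hu Hw Huw *.
      have /andP[Hx0 Hy0] := Hpos (ltn0Sn a).
      exact: uniq4'.
  -
    pose e := enum (B 0).
    have He : size e = M by rewrite /e -cardE /B Pc.
    have Hein : forall i, i < M -> nth x0 e i \in B 0.
      by move=> i Hi; rewrite -mem_enum; apply: mem_nth; rewrite He.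
    have Hne : forall i j, i < M -> j < M -> i != j -> nth x0 e i != nth x0 e j.
      by move=> i j Hi Hj Hij; rewrite nth_uniq ?He // enum_uniq.
    exists (fun _ => nth x0 e 0), (fun _ => nth x0 e 1), (fun _ => nth x0 e 2), (fun _ => nth x0 e 3).
    split => a Ha; have Ea : a = 0 by lia.
    + subst a; split; try (apply: Hein; apply: leq_trans HM8; done).
      have H8 : forall i, i < 8 -> i < M by move=> i Hi; apply: leq_trans Hi HM8.
      apply: uniq4; rewrite ?inE ?negb_or; try (apply/andP; split); apply: Hne; by rewrite ?H8.
    + subst a => a1 b1 c1 Ha1 Hb1 Hc1 H1 H2 H3.
      have Hsub : forall z, z \in [set nth x0 e 0; nth x0 e 1; nth x0 e 2; nth x0 e 3] -> z \in B 0.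
        by move=> z /mem4P [] ->; apply: Hein; apply: leq_trans HM8.
      exact: (Pred (q 0) _ _ _ (Hsub _ Ha1) (Hsub _ Hb1) (Hsub _ Hc1) H1 H2 H3).
have HBc : forall a, a < k -> #|B a| = M by move=> a _; exact: Pc.
have HBd : forall a b, a < k -> b < k -> a != b -> [disjoint B a & B b].
  by move=> a b Ha Hb Hab; apply: Pdis; exact: Hq.
have HBr : forall a, a < k -> forall a1 b1 c1, a1 \in B a -> b1 \in B a -> c1 \in B a ->
    a1 != b1 -> a1 != c1 -> b1 != c1 -> col [set a1; b1; c1].
  by move=> a _; exact: Pred.
have [Hchain [Hflex Hspine]] := chain_ok x0 HM8 Hk HBc HBd HBr Hxy HL.
exists (k * M), (vv x0 B x y u w), (3 * k), (II M k); split => //.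
- apply: real1 => //; lia.
- apply: real2 Heps HNeps _ Hspine; lia.
Qed.
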